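(* Let $G=D\rtimes M$ be a finite soluble group such that: (i) $D$ is an abelian Hall subgroup of $G$ of odd order and $M$ is a $\sigma$-nilpotent $M$-group; (ii) every element of $G$ induces a power automorphism on $D$; (iii) for every $i$, $O_{\sigma_i}(D)$ has a normal complement in a Hall $\sigma_i$-subgroup of $G$. If $A$ is a $\sigma$-primary $\sigma$-subnormal subgroup of $G$ with $A\le M$, then $D\le C_G(A)$.
   Context: $\sigma=\{\sigma_i\mid i\in I\}$ is a partition of the set of all primes. A group is $\sigma$-primary if it is a $\sigma_i$-group for some $i$, and $\sigma$-nilpotent if it is a direct product of $\sigma$-primary groups. A Hall $\sigma_i$-subgroup is a $\sigma_i$-subgroup whose index involves no prime of $\sigma_i$; $O_{\sigma_i}(D)$ is the largest normal $\sigma_i$-subgroup of $D$. $A_G$ is the core of $A$ in $G$. $A$ is $\sigma$-subnormal in $G$ if there is a chain $A=A_0\le\cdots\le A_n=G$ with, for each $i$, $A_{i-1}\trianglelefteq A_i$ or $A_i/(A_{i-1})_{A_i}$ $\sigma$-primary. An $M$-group is a group whose subgroup lattice is modular. A power automorphism is an automorphism mapping every subgroup to itself. *)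

(* Defs.v *)
From mathcomp Require Import all_boot all_fingroup all_solvable.
Set Implicit Arguments. Unset Strict Implicit. Unset Printing Implicit Defensive.
Local Open Scope group_scope.

(* A partition sigma = {sigma_i | i in I} of the primes is encoded by a map
   sigma : nat -> I sending each prime p to the index i with p in sigma_i.  *)
Definition sigma_i (I : eqType) (sigma : nat -> I) (i : I) : nat_pred :=
  [pred p | sigma p == i].

Section Defs.
Variables (I : eqType) (sigma : nat -> I) (gT : finGroupType).

Definition sigma_primary (H : {set gT}) : Prop :=
  exists i : I, (sigma_i sigma i).-group H.

Definition sigma_nilpotent (H : {set gT}) : Prop :=
  exists s : seq {group gT},
    \big[dprod/1]_(X <- s) (X : {set gT}) = H /\
    (forall X, X \in s -> sigma_primary X).

Definition sigma_step (X Y : {group gT}) : Prop :=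
  X \subset Y /\
  (X <| Y \/
   (exists i : I, (sigma_i sigma i).-group (Y / gcore X Y))).

Definition sigma_subnormal (A G : {group gT}) : Prop :=
  exists (n : nat) (f : nat -> {group gT}),
    f 0 = A /\ f n = G /\ (forall k, k < n -> sigma_step (f k) (f k.+1)).

(* M-group: the subgroup lattice of M is modular *)
Definition modular_group (M : {set gT}) : Prop :=
  forall X Y Z : {group gT},
    X \subset M -> Y \subset M -> Z \subset M -> X \subset Z ->
    X <*> (Y :&: Z) = (X <*> Y) :&: Z.

Definition power_auts_on (G D : {set gT}) : Prop :=
  forall g, g \in G -> forall H : {group gT}, H \subset D -> H :^ g = H.

End Defs.

(* Main.v *)
Require Import Defs.
From mathcomp Require Import all_boot all_fingroup all_solvable.
From mathcomp Require Import zify.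
Set Implicit Arguments. Unset Strict Implicit. Unset Printing Implicit Defensive.
Local Open Scope group_scope.

Lemma fin_cop (gT : finGroupType) (pi : nat_pred) (A L : {group gT}) :
  pi.-group A -> pi^'.-group L -> solvable L -> A \subset 'N(L) ->
  A \subset 'C([~: L, A]) -> A \subset 'C(L).
Proof.
move=> piA piL solL nLA cKA.
set K := [~: L, A]%G.
have nKA : A \subset 'N(K) by exact: commg_normr.
have nKL : L \subset 'N(K) by exact: commg_norml.
have sKL : K \subset L by rewrite /K /= commg_subl.
have coKA : coprime #|K| #|A|.
  by rewrite coprime_sym (pnat_coprime piA) //; exact: (pgroupS sKL piL).
have E := coprime_norm_quotient_cent nLA nKA coKA (solvableS sKL solL).
have : L / K \subset 'C_L(A) / K.
  rewrite E subsetI subxx /= quotient_cents2 //.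
have sKC : K \subset 'C_L(A) by rewrite subsetI sKL centsC.
rewrite quotientSGK // => /subsetIP [_]; by rewrite centsC.
Qed.

Lemma chain (I : eqType) (sigma : nat -> I) (gT : finGroupType) (G A : {group gT})
  (i : I) (n : nat) (f : nat -> {group gT}) :
  solvable G -> (sigma_i sigma i).-group A -> f 0 = A -> f n = G ->
  (forall k, k < n -> sigma_step sigma (f k) (f k.+1)) ->
  forall L : {group gT}, (sigma_i sigma i)^'.-group L -> L <| G -> A \subset 'C(L).
Proof.
set pi := sigma_i sigma i.
move=> solG piA f0 fn st.
have sfG : forall m k, k + m = n -> f k \subset G.
  elim=> [|m IH] k.
    by rewrite addn0 => ->; rewrite fn.
  move=> e; have [sXY _] := st k (ltac:(lia)).
  apply: subset_trans sXY (IH k.+1 _); lia.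
have key : forall k, k <= n -> A \subset f k /\
    forall L : {group gT}, pi^'.-group L -> L <| f k -> A \subset 'C(L).
  elim=> [|k IH] hk.
    rewrite f0; split=> // L piL nLA.
    have sLA := normal_sub nLA.
    have /trivgP -> : L \subset [1].
      apply/trivgP/card1_trivg/(pnat_1 (pgroupS sLA piA)); exact: piL.
    by rewrite cents1.
  have [sAX IHc] := IH (ltnW hk).
  have [sXY hst] := st k hk.
  have sYG := sfG (n - k.+1) k.+1 ltac:(lia).
  have solY : solvable (f k.+1) := solvableS sYG solG.
  split; first exact: subset_trans sAX sXY.
  move=> L piL nsLY.
  have nLY := normal_norm nsLY; have sLY := normal_sub nsLY.
  have solL := solvableS sLY solY.
  have nLA : A \subset 'N(L) := subset_trans (subset_trans sAX sXY) nLY.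
  apply: (fin_cop piA piL solL nLA).
  case: hst => [nsXY | [j qj]].
    have nsLX : (f k) :&: L <| f k := normalGI sXY nsLY.
    have cA := IHc _ (pgroupS (subsetIr _ _) piL) nsLX.
    apply: subset_trans cA (centS _).
    rewrite /= setIC; apply: commg_subI.
      by rewrite subsetI subxx (subset_trans sLY (normal_norm nsXY)).
    by rewrite subsetI sAX nLA.
  set C := gcore (f k) (f k.+1).
  have sCX : C \subset f k := gcore_sub _ _.
  have nCY : f k.+1 \subset 'N(C) := gcore_norm _ _.
  have nsCY : C <| f k.+1 by rewrite /normal (subset_trans sCX sXY) nCY.
  have [ji | ji] := eqVneq j i.
    subst j.
    have sLC : L \subset C.
      rewrite -quotient_sub1; last exact: subset_trans sLY nCY.
      apply/trivgP/card1_trivg/(pnat_1 (pgroupS (quotientS _ sLY) qj)).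
      exact: quotient_pgroup.
    have nsLX : L <| f k := normalS (subset_trans sLC sCX) sXY nsLY.
    have cA := IHc _ piL nsLX.
    by apply: subset_trans cA (centS _); rewrite commg_subl.
  have piq : pi^'.-group (f k.+1 / C).
    apply: sub_pgroup qj => p; rewrite !inE /= => /eqP E; by rewrite /pi /sigma_i E.
  have sAC : A \subset C.
    rewrite -quotient_sub1; last exact: subset_trans (subset_trans sAX sXY) nCY.
    apply/trivgP/card1_trivg/(pnat_1 (quotient_pgroup _ piA)).
    exact: pgroupS (quotientS _ (subset_trans sAX sXY)) piq.
  have nsLX : C :&: L <| f k := normalS (subset_trans (subsetIl _ _) sCX) sXY (normalI nsCY nsLY).
  have cA := IHc _ (pgroupS (subsetIr _ _) piL) nsLX.
  apply: subset_trans cA (centS _).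
  rewrite /= setIC; apply: commg_subI.
    by rewrite subsetI subxx (subset_trans sLY nCY).
  by rewrite subsetI sAC nLA.
move=> L piL nsLG; have [_ ] := key n (leqnn n).
by apply => //; rewrite fn.
Qed.

Theorem lemma2p7 (I : eqType) (sigma : nat -> I) (gT : finGroupType)
    (G D M A : {group gT}) :
  solvable G ->
  D ><| M = G ->
  abelian D -> Hall G D -> odd #|D| ->
  sigma_nilpotent sigma M -> modular_group M ->
  power_auts_on G D ->
  (forall i : I, exists H : {group gT},
      (sigma_i sigma i).-Hall(G) H /\
      exists N : {group gT}, N <| H /\ N ><| 'O_(sigma_i sigma i)(D) = H) ->
  sigma_primary sigma A -> sigma_subnormal sigma A G -> A \subset M ->
  D \subset 'C_G(A).
Proof.
move=> solG defG abD _ _ _ _ _ hH [i piA] [n [f [f0 [fn st]]]] sAM.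
set pi := sigma_i sigma i.
have [nsDG sMG _ _ _] := sdprod_context defG.
have sAG : A \subset G := subset_trans sAM sMG.
have nsO1 : 'O_pi(D) <| G := char_normal_trans (pcore_char pi D) nsDG.
have nsO2 : 'O_pi^'(D) <| G := char_normal_trans (pcore_char pi^' D) nsDG.
have cA2 : A \subset 'C('O_pi^'(D)).
  exact: (chain solG piA f0 fn st (pcore_pgroup _ _) nsO2).
have cA1 : A \subset 'C('O_pi(D)).
  have [H [hallH [N [nsNH defH]]]] := hH i.
  have [_ NO _ tiNO] := sdprodP defH.
  have [x xG sAHx] := Hall_subJ solG hallH sAG piA.
  have sOH : 'O_pi(D) \subset H by rewrite -NO mulG_subr.
  have nsOH : 'O_pi(D) <| H := normalS sOH (pHall_sub hallH) nsO1.
  have cHO : H \subset 'C('O_pi(D)).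
    rewrite -NO mul_subG //.
      apply/commG1P/eqP; rewrite eqEsubset sub1G andbT -tiNO; apply: commg_subI.
        by rewrite subsetI subxx (subset_trans (normal_sub nsNH) (normal_norm nsOH)).
      by rewrite subsetI subxx (subset_trans sOH (normal_norm nsNH)).
    exact: abelianS (pcore_sub _ _) abD.
  have Ex : 'O_pi(D) :^ x = 'O_pi(D) by apply: (normsP (normal_norm nsO1)).
  apply: subset_trans sAHx _.
  by rewrite -Ex centJ conjSg.
have defD := dprodW (nilpotent_pcoreC pi (abelian_nil abD)).
rewrite subsetI (normal_sub nsDG) -defD mul_subG // centsC //.
Qed.
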